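(* For all integers $1\le t\le n$, the $t$-path ideal $I=I_t(L_n)$ is normal, i.e. $\overline{I^s}=I^s$ for all $s\ge 1$ (where $\overline{J}$ denotes the integral closure of $J$).
   Context: $K$ is a field, $S=K[x_1,\ldots,x_n]$, and $I_t(L_n)=(u_1,\ldots,u_{n-t+1})$ with $u_i=x_ix_{i+1}\cdots x_{i+t-1}$ (the $t$-path ideal of the line graph $L_n$ with edges $\{x_j,x_{j+1}\}$). *)

(* Defs.v *)
From HB Require Import structures.
From mathcomp Require Import all_boot all_order all_algebra.
From mathcomp Require Import mpoly.
Set Implicit Arguments. Unset Strict Implicit. Unset Printing Implicit Defensive.
Import GRing.Theory.
Local Open Scope ring_scope.

Definition gen_ideal (R : comNzRingType) (A : R -> Prop) : R -> Prop :=
  fun f => exists s : seq (R * R),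
    (forall p, p \in s -> A p.2) /\ f = \sum_(p <- s) p.1 * p.2.

Definition ideal_pow (R : comNzRingType) (J : R -> Prop) (s : nat) : R -> Prop :=
  gen_ideal (fun g => exists l : seq R,
     size l = s /\ (forall a, a \in l -> J a) /\ g = \prod_(a <- l) a).

Definition integral_closure (R : comNzRingType) (J : R -> Prop) : R -> Prop :=
  fun f => exists m : nat, (0 < m)%N /\ exists a : nat -> R,
    (forall i, (1 <= i <= m)%N -> ideal_pow J i (a i)) /\
    f ^+ m + \sum_(1 <= i < m.+1) a i * f ^+ (m - i) = 0.

(* The variables x_1,...,x_n of S = K[x_1..x_n] are 'X_j, j : 'I_n
   (0-based: x_{j+1} = 'X_j). *)
(* u_{i+1} = x_{i+1} x_{i+2} ... x_{i+t}  (0-based i), i.e. the product of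
   'X_j for i <= j < i + t. *)
Definition path_mon (K : fieldType) (n t i : nat) : {mpoly K[n]} :=
  \prod_(j < n | (i <= j < i + t)%N) 'X_j.

Definition path_gens (K : fieldType) (n t : nat) : seq {mpoly K[n]} :=
  [seq path_mon K n t i | i <- iota 0 (n - t + 1)].

Definition path_ideal (K : fieldType) (n t : nat) : {mpoly K[n]} -> Prop :=
  gen_ideal (fun g => g \in path_gens K n t).

Arguments path_mon K n t i : clear implicits.
Arguments path_gens K n t : clear implicits.
Arguments path_ideal K n t : clear implicits.

(* Main.v *)
Require Import Defs.
From HB Require Import structures.
From mathcomp Require Import all_boot all_order all_algebra.
From mathcomp Require Import mpoly.
From mathcomp Require Import zify.
Set Implicit Arguments. Unset Strict Implicit. Unset Printing Implicit Defensive.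
Import GRing.Theory.
Local Open Scope ring_scope.

Section Ideals.
Variable R : comNzRingType.
Implicit Types (A B : R -> Prop) (f g : R).

Lemma gen_ideal_gen A a : A a -> gen_ideal A a.
Proof.
move=> Aa; exists [:: (1, a)]; split; last by rewrite big_seq1 mul1r.
by move=> p; rewrite inE => /eqP->.
Qed.

Lemma gen_ideal0 A : gen_ideal A 0.
Proof. by exists [::]; rewrite big_nil. Qed.

Lemma gen_idealD A f g : gen_ideal A f -> gen_ideal A g -> gen_ideal A (f + g).
Proof.
move=> [s1 [H1 ->]] [s2 [H2 ->]]; exists (s1 ++ s2); split; last by rewrite big_cat.
by move=> p; rewrite mem_cat => /orP[/H1|/H2].
Qed.

Lemma gen_idealM A r f : gen_ideal A f -> gen_ideal A (r * f).
Proof.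
move=> [s [H ->]]; exists [seq (r * p.1, p.2) | p <- s]; split.
  by move=> p /mapP[q qs ->]; exact: (H q qs).
by rewrite big_map mulr_sumr; apply: eq_bigr => p _; rewrite mulrA.
Qed.

Lemma gen_ideal_sum A (I : eqType) (r : seq I) (F : I -> R) :
  (forall i, i \in r -> gen_ideal A (F i)) -> gen_ideal A (\sum_(i <- r) F i).
Proof.
elim: r => [|x r IH] H; first by rewrite big_nil; exact: gen_ideal0.
rewrite big_cons; apply: gen_idealD; first by apply: H; rewrite inE eqxx.
by apply: IH => i ir; apply: H; rewrite inE ir orbT.
Qed.

Lemma ideal_pow1 A f : A f -> ideal_pow A 1 f.
Proof.
move=> Af; apply: gen_ideal_gen; exists [:: f]; split=> //; split; last by rewrite big_seq1.
by move=> a; rewrite inE => /eqP->.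
Qed.

Lemma closure_sub A f : A f -> integral_closure A f.
Proof.
move=> Af; exists 1%N; split=> //; exists (fun _ => - f); split.
  move=> i /andP[h1 h2]; have -> : i = 1%N by apply/eqP; rewrite eqn_leq h1 h2.
  by rewrite -mulN1r; apply: gen_idealM; apply: ideal_pow1.
by rewrite big_nat1 subnn expr0 mulr1 expr1 subrr.
Qed.
End Ideals.

Section Dv.
Variable R : comNzRingType.
Definition Dv k (p : {poly R}) := exists q, p = 'X^k * q.

Lemma Dv0 k : Dv k 0. Proof. by exists 0; rewrite mulr0. Qed.
Lemma DvD k p q : Dv k p -> Dv k q -> Dv k (p + q).
Proof. by move=> [a ->] [b ->]; exists (a + b); rewrite mulrDr. Qed.
Lemma DvMl k r p : Dv k p -> Dv k (r * p).
Proof. by move=> [a ->]; exists (r * a); rewrite mulrCA. Qed.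
Lemma DvM a b p q : Dv a p -> Dv b q -> Dv (a + b) (p * q).
Proof. by move=> [x ->] [y ->]; exists (x * y); rewrite exprD mulrACA. Qed.
Lemma Dv_le a b p : (b <= a)%N -> Dv a p -> Dv b p.
Proof.
by move=> ba [x ->]; exists ('X^(a - b) * x); rewrite mulrA -exprD subnKC.
Qed.

Variable S : comNzRingType.
Variable phi : {rmorphism S -> {poly R}}.

Lemma Dv_gen (A : S -> Prop) k : (forall a, A a -> Dv k (phi a)) ->
  forall g, gen_ideal A g -> Dv k (phi g).
Proof.
move=> HA g [s [Hs ->]]; rewrite rmorph_sum.
elim: s Hs => [|x s IH] Hs; first by rewrite big_nil; exact: Dv0.
rewrite big_cons; apply: DvD; last by apply: IH => p ps; apply: Hs; rewrite inE ps orbT.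
by rewrite rmorphM; apply: DvMl; apply: HA; apply: Hs; rewrite inE eqxx.
Qed.

Lemma Dv_pow (A : S -> Prop) k i : (forall a, A a -> Dv k (phi a)) ->
  forall g, ideal_pow A i g -> Dv (k * i) (phi g).
Proof.
move=> HA; apply: Dv_gen => _ [l [<- [Hl ->]]]; rewrite rmorph_prod.
elim: l Hl => [|x l IH] Hl; first by rewrite big_nil muln0; exists 1; rewrite mulr1.
rewrite big_cons /= mulnS; apply: DvM; first by apply: HA; apply: Hl; rewrite inE eqxx.
by apply: IH => a al; apply: Hl; rewrite inE al orbT.
Qed.
End Dv.


Section Val.
Variables (K : fieldType) (n : nat) (Y : {set 'I_n}).
Definition cf : K -> {poly {mpoly K[n]}} := (@polyC _ \o @mpolyC n K).
Definition hY (j : 'I_n) : {poly {mpoly K[n]}} :=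
  if j \in Y then ('X_j)%:P * 'X else ('X_j)%:P.
Definition cfR : {rmorphism K -> {poly {mpoly K[n]}}} := cf.
Definition Phi (p : {mpoly K[n]}) := mmap cfR hY p.
Definition dY (m : 'X_{1..n}) : nat := (\sum_(j in Y) m j)%N.

Lemma PhiM a b : Phi (a * b) = Phi a * Phi b.
Proof. by rewrite /Phi rmorphM. Qed.
Lemma PhiD a b : Phi (a + b) = Phi a + Phi b.
Proof. by rewrite /Phi rmorphD. Qed.
Lemma Phi0 : Phi 0 = 0.
Proof. by rewrite /Phi rmorph0. Qed.
Lemma PhiXn a k : Phi (a ^+ k) = Phi a ^+ k.
Proof. by rewrite /Phi rmorphXn. Qed.
Lemma Phi_sum (I : Type) (r : seq I) (P : pred I) (F : I -> {mpoly K[n]}) :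
  Phi (\sum_(i <- r | P i) F i) = \sum_(i <- r | P i) Phi (F i).
Proof. by rewrite /Phi raddf_sum. Qed.
Lemma Phi_prod (I : Type) (r : seq I) (P : pred I) (F : I -> {mpoly K[n]}) :
  Phi (\prod_(i <- r | P i) F i) = \prod_(i <- r | P i) Phi (F i).
Proof. by rewrite /Phi rmorph_prod. Qed.

Lemma PhiXj j : Phi 'X_j = hY j.
Proof. by rewrite /Phi mmapX mmap1U. Qed.

Lemma PhiXm m : Phi 'X_[m] = ('X_[m])%:P * 'X^(dY m).
Proof.
rewrite /Phi mmapX /mmap1.
rewrite (eq_bigr (fun j => (('X_j ^+ m j)%:P * 'X^(if j \in Y then m j else 0%N)))); last first.
  move=> j _; rewrite /hY; case: (j \in Y); last by rewrite expr0 mulr1 rmorphXn.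
  by rewrite exprMn rmorphXn.
rewrite big_split /= -rmorph_prod -mpolyXE_id prodrXr /dY [in RHS]big_mkcond.
by [].
Qed.

Lemma coefCXn (c : {mpoly K[n]}) d k : (c%:P * 'X^d)`_k = if d == k then c else 0.
Proof.
rewrite coefMXn coefC; case: ltnP => h.
  by have -> : (d == k) = false by apply/negbTE/eqP; lia.
have [->|ne] := eqVneq d k; first by rewrite subnn.
by have -> : (k - d == 0)%N = false by apply/negbTE/eqP; move/eqP: ne; lia.
Qed.

Lemma Phi_coef f k : (Phi f)`_k = \sum_(m <- msupp f | dY m == k) f@_m *: 'X_[m].
Proof.
rewrite {1}[f]mpolyE /Phi raddf_sum coef_sum [in RHS]big_mkcond /=; apply: eq_bigr => m _.
rewrite mmapZ -/(Phi _) PhiXm mulrA /cfR /cf /= -rmorphM mul_mpolyC coefCXn.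
by [].
Qed.
End Val.

Section Val2.
Variables (K : fieldType) (n : nat) (Y : {set 'I_n}).
Local Notation Phi := (Phi Y).
Local Notation dY := (dY Y).

Lemma Phi_pow (P : {mpoly K[n]} -> Prop) k i :
  (forall a, P a -> Dv k (Phi a)) -> forall g, ideal_pow P i g -> Dv (k * i) (Phi g).
Proof. move=> H; exact: (@Dv_pow _ _ (mmap (cfR K n) (hY K Y) : {rmorphism _ -> _}) P k i H). Qed.

Lemma Phi_gen (P : {mpoly K[n]} -> Prop) k :
  (forall a, P a -> Dv k (Phi a)) -> forall g, gen_ideal P g -> Dv k (Phi g).
Proof. move=> H; exact: (@Dv_gen _ _ (mmap (cfR K n) (hY K Y) : {rmorphism _ -> _}) P k H). Qed.

Lemma coef0X (R : comNzRingType) (q : {poly R}) M : (q ^+ M)`_0 = q`_0 ^+ M.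
Proof. by rewrite -!horner_coef0 horner_exp. Qed.

Lemma val_main (P : {mpoly K[n]} -> Prop) s f :
  (forall a, P a -> Dv 1 (Phi a)) ->
  integral_closure (ideal_pow P s) f ->
  forall m, m \in msupp f -> (s <= dY m)%N.
Proof.
move=> HP [M [M0 [a [Ha Heq]]]] m msup.
rewrite leqNgt; apply/negP => lt.
pose Q k := has (fun m => dY m == k) (msupp f).
have exQ : exists k, Q k by exists (dY m); apply/hasP; exists m.
case: (ex_minnP exQ) => v /hasP[m1 m1s /eqP dm1] vmin.
have vs : (v < s)%N.
  have : Q (dY m) by apply/hasP; exists m.
  by move/vmin; lia.
have low : forall k, (k < v)%N -> (Phi f)`_k = 0.
  move=> k kv; rewrite Phi_coef big1_seq // => m' /andP[/eqP dk m's].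
  have : Q k by apply/hasP; exists m'; rewrite ?dk.
  by move/vmin; lia.
have pE : Phi f = drop_poly v (Phi f) * 'X^v.
  rewrite -[LHS](poly_take_drop v) (_ : take_poly v _ = 0) ?add0r //.
  apply/polyP => k; rewrite coef_take_poly coef0; case: ltnP => // kv; exact: low.
set q := drop_poly v (Phi f) in pE.
have q0 : q`_0 != 0.
  rewrite coef_drop_poly add0n Phi_coef.
  apply/eqP => h; have := congr1 (mcoeff m1) h.
  rewrite raddf_sum raddf0 -big_filter (bigD1_seq m1) /=; first last.
  - exact: filter_uniq (msupp_uniq f).
  - by rewrite mem_filter dm1 eqxx.
  rewrite mcoeffZ mcoeffX eqxx mulr1 big1 ?addr0.
    by move=> e; move: m1s; rewrite mcoeff_msupp e eqxx.
  by move=> m' ne; rewrite mcoeffZ mcoeffX (negbTE ne) mulr0.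
have DS : Dv (v * M).+1 (\sum_(1 <= i < M.+1) Phi (a i * f ^+ (M - i))).
  rewrite big_nat_cond; apply: (big_ind (Dv _)); [exact: Dv0 | exact: DvD | ].
  move=> i /andP[/andP[i1 iM] _].
  rewrite PhiM PhiXn pE.
  have D1 : Dv (s * i) (Phi (a i)).
    apply: (Phi_pow (P := ideal_pow P s)) (Ha i _) ; last by rewrite i1 -ltnS.
    by move=> b Pb; rewrite -[s]mul1n; apply: Phi_pow Pb.
  have D2 : Dv (v * (M - i)) ((q * 'X^v) ^+ (M - i)).
    by exists (q ^+ (M - i)); rewrite exprMn -exprM mulrC.
  apply: Dv_le (DvM D1 D2); nia.
have := congr1 Phi Heq; rewrite PhiD Phi0 PhiXn Phi_sum.
case: DS => r ->; rewrite pE exprMn -exprM exprS.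
rewrite [q ^+ M * _]mulrC (mulrC 'X) -mulrA -mulrDr.
move/eqP; rewrite mulf_eq0 expf_eq0 polyX_eq0 andbF /= => /eqP h.
have := congr1 (fun p : {poly {mpoly K[n]}} => p`_0) h; rewrite /= coefD coefXM /= coef0 addr0 coef0X.
by move/eqP; rewrite expf_eq0 (negbTE q0) andbF.
Qed.
End Val2.


Definition hits (n t k : nat) (Y : {set 'I_n}) : bool :=
  [forall i : 'I_(n - t + 1), (i < k)%N ==> [exists j in Y, (i <= j)%N && (j < i + t)%N]].

Section Comb.
Variables (n t : nat) (t1 : (1 <= t)%N) (tn : (t <= n)%N) (m : 'X_{1..n}).
Local Notation N := (n - t + 1)%N.
Definition w (Y : {set 'I_n}) : nat := (\sum_(j in Y) m j)%N.

Lemma hitsT k : hits t k [set: 'I_n].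
Proof.
apply/forallP => i; apply/implyP => _.
have ilt : (i < n)%N by have := ltn_ord i; lia.
by apply/existsP; exists (Ordinal ilt); rewrite in_setT /=; lia.
Qed.

Definition E k : nat := w [arg min_(Y < [set: 'I_n] | hits t k Y) w Y].

Lemma Emin k (Y : {set 'I_n}) : hits t k Y -> (E k <= w Y)%N.
Proof. by rewrite /E; case: arg_minnP => [|Z _ HZ /HZ //]; exact: hitsT. Qed.

Lemma Ewit k : exists Y, hits t k Y /\ E k = w Y.
Proof. by rewrite /E; case: arg_minnP => [|Z HZ _]; [exact: hitsT | exists Z]. Qed.

Lemma hits_mono k k' (Y : {set 'I_n}) : (k <= k')%N -> hits t k' Y -> hits t k Y.
Proof.
move=> kk /forallP H; apply/forallP => i; apply/implyP => ik.
by have /implyP := H i; apply; lia.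
Qed.

Lemma Emono k k' : (k <= k')%N -> (E k <= E k')%N.
Proof. by move=> kk; have [Y [HY ->]] := Ewit k'; apply: Emin; apply: hits_mono HY. Qed.

Lemma E0 : E 0 = 0%N.
Proof.
apply/eqP; rewrite -leqn0 (leq_trans (Emin (Y := set0) _)) //.
  by apply/forallP => i.
by rewrite /w big_set0.
Qed.

Lemma Ekey (j : 'I_n) : (E (minn j.+1 N) <= E (j.+1 - t) + m j)%N.
Proof.
have [Y [HY ->]] := Ewit (j.+1 - t).
apply: (@leq_trans (w (j |: Y))).
  apply: Emin; apply/forallP => i; apply/implyP => ik.
  have [ilo|ihi] := ltnP i (j.+1 - t).
    move/forallP: HY => /(_ i) /implyP /(_ ilo) /existsP [j' /andP [j'Y hj]].
    by apply/existsP; exists j'; rewrite in_setU1 j'Y orbT.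
  by apply/existsP; exists j; rewrite in_setU1 eqxx /=; lia.
have [jY|jY] := boolP (j \in Y).
  have -> : j |: Y = Y by apply/setUidPr; rewrite sub1set.
  exact: leq_addr.
by rewrite /w big_setU1 //= addnC.
Qed.

Definition win (j : nat) : pred nat := fun i => (i <= j)%N && (j < i + t)%N.

Definition l0 : seq nat :=
  flatten [seq nseq (E i.+1 - E i) i | i <- index_iota 0 N].

Lemma size_l0 : size l0 = E N.
Proof.
rewrite /l0 size_flatten /shape -map_comp.
rewrite (eq_map (g := fun i => (E i.+1 - E i)%N)); last by move=> i /=; rewrite size_nseq.
rewrite sumnE big_map telescope_sumn ?E0 ?subn0 //.
by move=> x y; apply: Emono.
Qed.

Lemma count_l0 (j : 'I_n) : (count (win j) l0 <= m j)%N.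
Proof.
rewrite /l0 count_flatten -map_comp.
rewrite (eq_map (g := fun i => (win j i * (E i.+1 - E i))%N)); last by move=> i /=; rewrite count_nseq.
set lo := (j.+1 - t)%N; set hi := minn j.+1 N.
pose G i := E (maxn lo (minn i hi)).
rewrite sumnE big_map.
rewrite (@eq_big_nat _ _ _ 0 N _ (fun i => G i.+1 - G i)%N); last first.
  move=> i /andP[_ iN]; rewrite /G /win.
  case: (boolP ((i <= j)%N && (j < i + t)%N)) => /= wi.
    have -> : maxn lo (minn i.+1 hi) = i.+1 by lia.
    have -> : maxn lo (minn i hi) = i by lia.
    by rewrite mul1n.
  have -> : maxn lo (minn i.+1 hi) = maxn lo (minn i hi) by lia.
  by rewrite mul0n subnn.
rewrite telescope_sumn; last by move=> x y xy; apply: Emono; lia.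
rewrite /G.
have -> : maxn lo (minn N hi) = hi by rewrite /lo /hi; have := ltn_ord j; lia.
have -> : maxn lo (minn 0 hi) = lo by rewrite /lo /hi; lia.
have := Ekey j; rewrite -/lo -/hi; lia.
Qed.

End Comb.

Lemma path_mon_prod (K : fieldType) n t (l : seq nat) :
  \prod_(i <- l) path_mon K n t i =
  \prod_(j < n) 'X_j ^+ count (win t j) l.
Proof.
rewrite /path_mon.
rewrite (eq_bigr (fun i => \prod_(j < n) 'X_j ^+ win t j i)); last first.
  move=> i _; rewrite big_mkcond /=; apply: eq_bigr => j _.
  by rewrite /win; case: ((i <= j)%N && (j < i + t)%N); rewrite ?expr1 ?expr0.
rewrite exchange_big /=; apply: eq_bigr => j _.
by rewrite prodrXr -sumn_count sumnE big_map.
Qed.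

Lemma mono_in_pow (K : fieldType) n t s (m : 'X_{1..n}) :
  (1 <= t)%N -> (t <= n)%N ->
  (forall Y : {set 'I_n}, hits t (n - t + 1) Y -> (s <= \sum_(j in Y) m j)%N) ->
  ideal_pow (path_ideal K n t) s 'X_[m].
Proof.
move=> t1 tn H.
have [Y [HY EY]] := Ewit t1 tn m (n - t + 1).
have sl0 : (s <= size (l0 t m))%N by rewrite size_l0 // EY; apply: H.
set l := take s (l0 t m).
have szl : size l = s by rewrite size_takel.
have cnt (j : 'I_n) : (count (win t j) l <= m j)%N.
  apply: leq_trans (count_l0 t1 tn m j).
  by rewrite -[X in (_ <= count _ X)%N](cat_take_drop s) count_cat leq_addr.
have lmem i : i \in l -> i \in iota 0 (n - t + 1).
  move/mem_take; rewrite /l0 => /flattenP [x /mapP [i' i'in ->]].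
  by rewrite mem_nseq => /andP [_ /eqP ->]; move: i'in; rewrite /index_iota subn0.
have -> : 'X_[m] = (\prod_(j < n) 'X_j ^+ (m j - count (win t j) l)) *
                   \prod_(i <- l) path_mon K n t i.
  rewrite path_mon_prod mpolyXE_id -big_split /=; apply: eq_bigr => j _.
  by rewrite -exprD subnK.
apply: gen_idealM; apply: gen_ideal_gen.
exists [seq path_mon K n t i | i <- l]; split; first by rewrite size_map.
split; last by rewrite big_map.
move=> a /mapP [i il ->]; apply: gen_ideal_gen.
by apply: map_f; apply: lmem.
Qed.


Lemma path_Dv (K : fieldType) n t (Y : {set 'I_n}) :
  hits t (n - t + 1) Y -> forall a, path_ideal K n t a -> Dv 1 (Phi Y a).
Proof.
move=> HY; apply: Phi_gen => _ /mapP [i iin ->].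
move: iin; rewrite mem_iota add0n => iN.
move/forallP: HY => /(_ (Ordinal iN)) /implyP /(_ iN) /existsP [j /andP [jY /= hj]].
rewrite /path_mon Phi_prod (bigD1 j) //= PhiXj /hY jY.
by exists (('X_j)%:P * \prod_(i0 < n | (i <= i0 < i + t)%N && (i0 != j)) Phi Y 'X_i0);
  rewrite expr1 mulrAC mulrC mulrA.
Qed.

Theorem corollary2p4 (K : fieldType) (n t : nat) :
  (1 <= t)%N -> (t <= n)%N ->
  forall s : nat, (1 <= s)%N ->
  forall f : {mpoly K[n]},
    integral_closure (ideal_pow (path_ideal K n t) s) f <->
    ideal_pow (path_ideal K n t) s f.
Proof.
move=> t1 tn s s1 f; split; last exact: closure_sub.
move=> Hint; rewrite [f]mpolyE; apply: gen_ideal_sum => m msup.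
rewrite -mul_mpolyC; apply: gen_idealM; apply: mono_in_pow => // Y HY.
exact: (val_main (path_Dv HY) Hint msup).
Qed.
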